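(* Let $X\ni x$ be a smooth surface germ and let $g:X_n\to X_{n-1}\to\cdots\to X_1\to X_0:=X$ be a sequence of blow-ups with the data $(f_i,F_i,x_i\in X_i)$ whose dual graph $\mathcal{DG}$ (the dual graph of the composite morphism $X_n\to X$) is a chain. Let $n_3$ be the largest integer with $n_3\le n$ such that $x_i\in F_i\setminus F_{i-1}$ for all $1\le i\le n_3-1$, where $F_0:=\emptyset$. Index the vertices of $\mathcal{DG}$ as $\{E_j\}_{-n_1\le j\le n_2}$ so that $E_0:=F_n$ (the only $g$-exceptional $(-1)$-curve on $X_n$), $E_{n_2}:=F_1$, and $E_j$ is adjacent to $E_{j+1}$ for $-n_1\le j\le n_2-1$. Let $w_j:=-E_j\cdot E_j$, $W_1:=\sum_{j<0}w_j$ and $W_2:=\sum_{j>0}w_j$. Then $$(W_1-n_1)+n_3-1=W_2-n_2.$$ In particular, $n=n_1+n_2+1\le n_3+\min\{W_1,W_2\}$.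
   Context: Work over an algebraically closed field. A sequence of blow-ups $X_n\to\cdots\to X_0:=X$ with the data $(f_i,F_i,x_i\in X_i)$ means: for $1\le i\le n$, $f_i:X_i\to X_{i-1}$ is the blow-up at a closed point $x_{i-1}\in X_{i-1}$ with exceptional curve $F_i$, where $x_0:=x$, and $x_i\in F_i$ for $1\le i\le n-1$; strict transforms of $F_i$ on later $X_j$ are again denoted $F_i$. The dual graph has the $n$ exceptional curves $F_1,\dots,F_n$ on $X_n$ as vertices, weights $-F_i\cdot F_i$, and edges given by intersection numbers; a chain is a path (tree without vertices of degree $\ge3$). In this situation $F_1$ is an end vertex of the chain. *)

(* Defs.v *)
(* Combinatorial model of a sequence of point blow-ups of a
   smooth surface germ, tracking the weighted dual graph of F_1,...,F_k. *)
From mathcomp Require Import all_boot all_algebra.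
Set Implicit Arguments. Unset Strict Implicit. Unset Printing Implicit Defensive.

(* A weighted dual graph on vertices 1..k:
   .1 v = weight -F_v.F_v, .2 u v = true iff F_u . F_v = 1 (u <> v). *)
Definition dgraph := ((nat -> nat) * (nat -> nat -> bool))%type.

(* Blow-up number k+1 (f_{k+1}: X_{k+1} -> X_k) at x_k.
   For k = 0, x_0 lies on no exceptional curve.  For k >= 1, x_k lies on F_k
   and, if o = Some j, also on F_j (then x_k = F_k cap F_j); if o = None, x_k
   lies on no F_j with j <> k.  Strict transforms of curves through x_k get
   weight +1, their mutual intersection (transversal, one point) disappears,
   and the new curve F_{k+1} (weight 1) meets exactly the curves through x_k. *)
Definition blowup (st : dgraph) (k : nat) (o : option nat) : dgraph :=
  let on v := (0 < k) && ((v == k) || (o == Some v)) in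
  (fun v => if v == k.+1 then 1 else st.1 v + on v,
   fun u v => if u == k.+1 then on v && (v != k.+1)
              else if v == k.+1 then on u
              else st.2 u v && ~~ (on u && on v)).

(* Dual graph of X_k -> X; c i describes the position of x_i (1 <= i). *)
Fixpoint dg (c : nat -> option nat) (k : nat) : dgraph :=
  match k with
  | 0 => (fun _ => 0, fun _ _ => false)
  | k'.+1 => blowup (dg c k') k' (c k')
  end.

Definition valid_seq (n : nat) (c : nat -> option nat) : Prop :=
  forall i j, 1 <= i -> i < n -> c i = Some j -> j < i /\ (dg c i).2 j i.

(* "x_i in F_i \ F_{i-1} for all 1 <= i <= m-1" (F_0 = empty). *)
Definition free_prefix (c : nat -> option nat) (m : nat) : Prop :=
  forall i, 1 <= i -> i <= m.-1 -> c i <> Some i.-1.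

Definition consec (s : seq nat) (u v : nat) : bool :=
  has (fun i => ((nth 0 s i == u) && (nth 0 s i.+1 == v)) ||
                ((nth 0 s i == v) && (nth 0 s i.+1 == u)))
      (iota 0 (size s).-1).

Definition chain_order (n : nat) (g : dgraph) (s : seq nat) : Prop :=
  perm_eq s (iota 1 n) /\
  (forall u v, u \in s -> v \in s -> u != v -> g.2 u v = consec s u v).

(* Main.v *)
Require Import Defs.
From mathcomp Require Import all_boot all_algebra zify.
Import GRing.Theory Num.Theory.


Definition onk (c : nat -> option nat) (k v : nat) : bool :=
  (0 < k) && ((v == k) || (c k == Some v)).

Lemma dg_w_step c k v : v != k.+1 ->
  (dg c k.+1).1 v = (dg c k).1 v + onk c k v.
Proof. by move=> H; rewrite /= (negbTE H). Qed.

Lemma dg_w_new c k : (dg c k.+1).1 k.+1 = 1.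
Proof. by rewrite /= eqxx. Qed.

Lemma dg_adj_step c k u v : (dg c k.+1).2 u v =
  if u == k.+1 then onk c k v && (v != k.+1)
  else if v == k.+1 then onk c k u
  else (dg c k).2 u v && ~~ (onk c k u && onk c k v).
Proof. by []. Qed.

Lemma dg_sym c k u v : (dg c k).2 u v = (dg c k).2 v u.
Proof.
elim: k u v => [//|k IH] u v; rewrite !dg_adj_step.
case: (eqVneq u k.+1) => Hu; case: (eqVneq v k.+1) => Hv //=.
- by rewrite !andbF.
- by rewrite andbT.
- by rewrite andbT.
- by rewrite IH (andbC (onk c k u)).
Qed.

Lemma dg_range n c k u v : valid_seq n c -> k <= n -> (dg c k).2 u v ->
  (0 < u <= k) && (0 < v <= k).
Proof.
move=> Hv; elim: k u v => [//|k IH] u v Hk; rewrite dg_adj_step.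
have key : forall x, onk c k x -> 0 < x <= k.
  move=> x; rewrite /onk => /andP[k0 /orP[/eqP->|/eqP Hc]]; first by rewrite k0 leqnn.
  have [Hj Ha] := Hv k x k0 Hk Hc.
  by have := IH _ _ (ltnW Hk) Ha; lia.
case: (eqVneq u k.+1) => [Eu|Hu].
  by move=> /andP[/key H _]; rewrite Eu; lia.
case: (eqVneq v k.+1) => [Ev|Hv'].
  by move=> /key H; rewrite Ev; lia.
by move=> /andP[/(IH _ _ (ltnW Hk)) H _]; lia.
Qed.

Lemma dg_adj_restrict n c k u v : valid_seq n c -> 0 < k -> k < n ->
  u != k.+1 -> v != k.+1 -> u != v ->
  (dg c k).2 u v = (dg c k.+1).2 u v || ((dg c k.+1).2 k.+1 u && (dg c k.+1).2 k.+1 v).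
Proof.
move=> Hv k0 kn Hu Hv' Huv.
rewrite !dg_adj_step eqxx (negbTE Hu) (negbTE Hv') /= !andbT.
case Ho: (onk c k u && onk c k v); last by rewrite andbT orbF.
rewrite orbT; move: Ho; rewrite /onk k0 /=.
case/andP=> /orP[/eqP Hu1|/eqP Hu1] /orP[/eqP Hv1|/eqP Hv1].
- by move: Huv; rewrite Hu1 Hv1 eqxx.
- by have [_ H] := Hv k v k0 kn Hv1; rewrite Hu1 dg_sym.
- by have [_ H] := Hv k u k0 kn Hu1; rewrite Hv1.
- by move: Huv; move: Hv1; rewrite Hu1 => -[->]; rewrite eqxx.
Qed.


Lemma consec_sym (s : seq nat) u v : consec s u v = consec s v u.
Proof. by apply: eq_has => i /=; rewrite orbC. Qed.

Lemma consec_nth (s : seq nat) i : i.+1 < size s -> consec s (nth 0 s i) (nth 0 s i.+1).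
Proof.
move=> Hi; apply/hasP; exists i; last by rewrite !eqxx.
by rewrite mem_iota add0n -subn1; lia.
Qed.

Lemma consec_idxE (s : seq nat) (u v : nat) : uniq s -> u \in s -> v \in s ->
  consec s u v = ((index u s).+1 == index v s) || ((index v s).+1 == index u s).
Proof.
move=> Us us vs; apply/hasP/idP.
- case=> i; rewrite -/(nat) mem_iota add0n -subn1 => /andP[_ Hi].
  have Hi1 : i.+1 < size s by lia.
  have Hi0 : i < size s by lia.
  case/orP=> /andP[/eqP Eu /eqP Ev].
    by rewrite -Eu -Ev !index_uniq // eqxx.
  by rewrite -Eu -Ev !index_uniq // eqxx orbT.
- have := us; have := vs; rewrite -!index_mem => vs' us'.
  case/orP=> /eqP E.
    exists (index u s); first by rewrite mem_iota -subn1; move: E vs'; move: (index u s) (index v s) (size s); lia.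
    by rewrite E !nth_index // !eqxx.
  exists (index v s); first by rewrite mem_iota -subn1; move: E us'; move: (index u s) (index v s) (size s); lia.
  by rewrite E !nth_index // !eqxx orbT.
Qed.

Lemma consec_idx (s : seq nat) (u v : nat) : uniq s -> consec s u v ->
  (index u s).+1 = index v s \/ (index v s).+1 = index u s.
Proof.
move=> Us /hasP[i]; rewrite mem_iota add0n -subn1 => /andP[_ Hi].
have Hi1 : i.+1 < size s by lia.
have Hi0 : i < size s by lia.
case/orP=> /andP[/eqP Eu /eqP Ev].
  by rewrite -Eu -Ev !index_uniq //; left.
by rewrite -Eu -Ev !index_uniq //; right.
Qed.

Lemma idx_inj {s : seq nat} {u v : nat} : u \in s -> v \in s -> index u s = index v s -> u = v.
Proof. by move=> us vs E; rewrite -(nth_index 0 us) E nth_index. Qed.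

Lemma consec_remove (a : seq nat) (x : nat) (b : seq nat) (u v : nat) : uniq (a ++ x :: b) -> u \in a ++ b -> v \in a ++ b ->
  u != v ->
  consec (a ++ b) u v = consec (a ++ x :: b) u v ||
     (consec (a ++ x :: b) x u && consec (a ++ x :: b) x v).
Proof.
move=> U ua va uv.
have U' : uniq (a ++ b).
  by move: U; rewrite -cat1s uniq_catCA cat1s => /andP[].
have xs : x \in a ++ x :: b by rewrite mem_cat inE eqxx orbT.
have ua' : u \in a ++ x :: b by move: ua; rewrite !mem_cat inE => /orP[]->; rewrite ?orbT.
have va' : v \in a ++ x :: b by move: va; rewrite !mem_cat inE => /orP[]->; rewrite ?orbT.
have xa : x \notin a by move: U; rewrite cat_uniq /= => /and3P[_ /norP[]].
have ux : u != x.
  apply/eqP=> E; move: U; rewrite -E cat_uniq /= => /and4P[_ /norP[H1 _] H2 _].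
  by move: ua; rewrite mem_cat (negbTE H2) orbF => H3; move: H1; rewrite H3.
have vx : v != x.
  apply/eqP=> E; move: U; rewrite -E cat_uniq /= => /and4P[_ /norP[H1 _] H2 _].
  by move: va; rewrite mem_cat (negbTE H2) orbF => H3; move: H1; rewrite H3.
have nuv : index u (a ++ b) != index v (a ++ b).
  by apply/eqP=> /(idx_inj ua va) /eqP; rewrite (negbTE uv).
rewrite !consec_idxE //.
rewrite !index_cat /= (negbTE xa) eqxx addn0 (eq_sym x u) (eq_sym x v) (negbTE ux) (negbTE vx).
move: nuv; rewrite !index_cat.
have Hua : u \in a -> index u a < size a by rewrite index_mem.
have Hva : v \in a -> index v a < size a by rewrite index_mem.
have Nuv : u \in a -> v \in a -> index u a != index v a.
  by move=> H1 H2; apply/eqP => /(idx_inj H1 H2) /eqP; rewrite (negbTE uv).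
have Nuvb : u \notin a -> v \notin a -> index u b != index v b.
  move=> H1 H2; apply/eqP => E; move/eqP: uv; apply.
  have ub : u \in b by move: ua; rewrite mem_cat (negbTE H1).
  have vb : v \in b by move: va; rewrite mem_cat (negbTE H2).
  exact: idx_inj ub vb E.
case: (u \in a) Hua Nuv Nuvb; case: (v \in a) Hva => Hva Hua Nuv Nuvb;
  (try move: (Hva isT)); (try move: (Hua isT)); (try move: (Nuv isT isT)); (try move: (Nuvb isT isT)); clear Hva Hua Nuv Nuvb;
  move: (index u a) (index v a) (index u b) (index v b) (size a) => iu iv ju jv sa /=;
  move=> *; apply/idP/idP => ?; lia.
Qed.


Lemma chain_uniq {k g s} : chain_order k g s -> uniq s.
Proof. by case=> /perm_uniq -> _; exact: iota_uniq. Qed.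

Lemma chain_mem {k g s} v : chain_order k g s -> (v \in s) = (0 < v <= k).
Proof. by case=> /perm_mem -> _; rewrite mem_iota add1n ltnS. Qed.

Lemma restrict n c k a b : valid_seq n c -> 0 < k -> k < n ->
  chain_order k.+1 (dg c k.+1) (a ++ k.+1 :: b) -> chain_order k (dg c k) (a ++ b).
Proof.
move=> Hv k0 kn Hc.
have U := chain_uniq Hc.
have Hm := chain_mem ^~ Hc.
case: Hc => P A; split.
  rewrite -(perm_cons k.+1).
  have P1 : perm_eq (k.+1 :: (a ++ b)) (a ++ k.+1 :: b).
    by apply/permP => p; rewrite /= !count_cat /=; lia.
  apply: perm_trans P1 _; apply: perm_trans P _.
  have -> : iota 1 k.+1 = iota 1 k ++ [:: k.+1] by rewrite -[k.+1]addn1 iotaD addnC.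
  by apply/permP => p; rewrite /= !count_cat /=; lia.
have xb : k.+1 \notin a ++ b.
  by move: U; rewrite -cat1s uniq_catCA cat1s => /andP[].
have inS : forall y, y \in a ++ b -> y \in a ++ k.+1 :: b.
  by move=> y; rewrite !mem_cat inE => /orP[]->; rewrite ?orbT.
have ne : forall y, y \in a ++ b -> y != k.+1.
  by move=> y yab; apply/eqP=> E; move: xb; rewrite -E yab.
have xs : k.+1 \in a ++ k.+1 :: b by rewrite mem_cat inE eqxx orbT.
move=> u v ua va uv.
rewrite (@dg_adj_restrict n c k u v Hv k0 kn (ne _ ua) (ne _ va) uv).
rewrite (@consec_remove a k.+1 b u v U ua va uv).
have nu : k.+1 != u by rewrite eq_sym ne.
have nv : k.+1 != v by rewrite eq_sym ne.
by rewrite A ?inS // (A k.+1 u xs (inS _ ua) nu) (A k.+1 v xs (inS _ va) nv).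
Qed.


Arguments dg_range {n c k u v}.
Arguments restrict {n c k a b}.
Arguments consec_idx {s u v}.
Arguments consec_idxE {s u v}.
Definition ident (k n3 : nat) (w : nat -> nat) (s : seq nat) : Prop :=
  \sum_(v <- take (index k s) s) w v + n3 + (size s - (index k s).+1) =
  \sum_(v <- drop (index k s).+1 s) w v + index k s + 1.

Lemma take_cat_size (a l : seq nat) m : take (size a + m) (a ++ l) = a ++ take m l.
Proof. by rewrite take_cat ltnNge leq_addr /= addKn. Qed.

Lemma drop_cat_size (a l : seq nat) m : drop (size a + m) (a ++ l) = drop m l.
Proof. by rewrite drop_cat ltnNge leq_addr /= addKn. Qed.

Lemma nth_cat_size (a l : seq nat) m : nth 0 (a ++ l) (size a + m) = nth 0 l m.
Proof. by rewrite nth_cat ltnNge leq_addr /= addKn. Qed.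

Lemma step_ident n c n3 k j : valid_seq n c -> 0 < k -> k < n -> c k = Some j ->
  (forall t, chain_order k (dg c k) t -> last 0 t = 1 -> ident k n3 (dg c k).1 t) ->
  forall s, chain_order k.+1 (dg c k.+1) s -> last 0 s = 1 ->
  ident k.+1 n3 (dg c k.+1).1 s.
Proof.
move=> Hv k0 kn Hck IH s Hs Hl.
have [jk Hadj] := Hv k j k0 kn Hck.
have j0 : 0 < j by have := dg_range Hv (ltnW kn) Hadj; lia.
have xs : k.+1 \in s by rewrite (chain_mem _ Hs); lia.
have adjx : forall v, v != k.+1 -> (dg c k.+1).2 k.+1 v = (v == k) || (v == j).
  move=> v vn; rewrite dg_adj_step eqxx vn andbT /onk k0 Hck /=.
  by congr orb; apply/eqP/eqP => [[]|->].
have Hw : forall v, v != k.+1 -> (dg c k.+1).1 v = (dg c k).1 v + ((v == k) || (v == j)).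
  move=> v vn; rewrite dg_w_step // /onk k0 Hck /=.
  by congr (_ + nat_of_bool (_ || _)); apply/eqP/eqP => [[]|->].
have wk : (dg c k).1 k = 1 by move: k0; case: (k) => // k' _; rewrite dg_w_new.
move: Hs Hl; case/splitPr: xs => a b Hs Hl.
case: b Hs Hl => [|y b'] Hs Hl.
  by move: Hl; rewrite last_cat /=; lia.
have U := chain_uniq Hs.
have Hm := chain_mem ^~ Hs.
have [_ A] := Hs.
case/lastP: a Hs Hl U Hm A => [|a' z] Hs Hl U Hm A.
  exfalso.
  have ks : k \in [:: k.+1, y & b'] by rewrite Hm; lia.
  have js : j \in [:: k.+1, y & b'] by rewrite Hm; lia.
  have xs : k.+1 \in [:: k.+1, y & b'] by rewrite inE eqxx.
  have C1 : consec [:: k.+1, y & b'] k.+1 k.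
    by rewrite -A // ?adjx ?eqxx //; apply/eqP; lia.
  have C2 : consec [:: k.+1, y & b'] k.+1 j.
    rewrite -A // ?adjx ?eqxx ?orbT //; apply/eqP; lia.
  have := consec_idx U C1; have := consec_idx U C2.
  rewrite [index k.+1 _]/= eqxx => I2 I1.
  have E : index k [:: k.+1, y & b'] = index j [:: k.+1, y & b'].
    by move: I1 I2; move: (index k _) (index j _); lia.
  by have := idx_inj ks js E; lia.
rewrite cat_rcons in Hs Hl U Hm A *.
set l := a' ++ [:: z, k.+1, y & b'] in Hs Hl U Hm A *.
move: (U); rewrite cat_uniq /= !inE => /and3P[_ Hh /and4P[Hz1 Hx1 Hy1 _]].
move: Hh; rewrite !negb_or => /and4P[za xa ya ba].
move: Hz1 Hx1 Hy1; rewrite !negb_or => /and3P[zx zy zb] /andP[xy xb] yb.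
change (ident k.+1 n3 (dg c k.+1).1 l).
have N0 : nth 0 l (size a') = z by rewrite /l -[size a']addn0 nth_cat_size.
have N1 : nth 0 l (size a').+1 = k.+1 by rewrite /l -[(size a').+1]addn1 nth_cat_size.
have N2 : nth 0 l (size a').+2 = y by rewrite /l -[(size a').+2]addn2 nth_cat_size.
have Sz : size l = size a' + size b' + 3 by rewrite /l size_cat /=; lia.
have Cz : consec l k.+1 z by rewrite consec_sym -N0 -N1 consec_nth // Sz; lia.
have Cy : consec l k.+1 y by rewrite -N1 -N2 consec_nth // Sz; lia.
have zl : z \in l by rewrite /l mem_cat !inE eqxx !orbT.
have xl : k.+1 \in l by rewrite /l mem_cat !inE eqxx !orbT.
have yl : y \in l by rewrite /l mem_cat !inE eqxx !orbT.
have Az : (z == k) || (z == j) by rewrite -adjx // A // eq_sym.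
have Ay : (y == k) || (y == j) by rewrite -adjx 1?eq_sym // A.
have Hs2 : chain_order k.+1 (dg c k.+1) (rcons a' z ++ k.+1 :: y :: b') by rewrite cat_rcons.
have := restrict Hv k0 kn Hs2; rewrite cat_rcons => Hs'.
have Hl' : last 0 (a' ++ [:: z, y & b']) = 1 by move: Hl; rewrite /l !last_cat.
have I := IH _ Hs' Hl'; move: I; rewrite /ident.
have Ix : index k.+1 l = size a' + 1.
  by rewrite /l index_cat (negbTE xa) /= (negbTE zx) eqxx addn1.
rewrite Ix -addnS take_cat_size drop_cat_size [take 1 _]/= [drop 2 _]/= !big_cat !big_cons !big_nil.
have Sum_eq : forall r, (forall v, v \in r -> [&& v != k, v != j & v != k.+1]) ->
    \sum_(v <- r) (dg c k.+1).1 v = \sum_(v <- r) (dg c k).1 v.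
  move=> r Hr; apply: eq_big_seq => v /Hr /and3P[vk vj vx].
  by rewrite Hw // (negbTE vk) (negbTE vj) addn0.
have wz : (dg c k.+1).1 z = (dg c k).1 z + 1 by rewrite Hw ?Az.
have wy : (dg c k.+1).1 y = (dg c k).1 y + 1 by rewrite Hw ?Ay // eq_sym.
rewrite wz wy.
have [[Ez Ey]|[Ez Ey]] : (z = k /\ y = j) \/ (z = j /\ y = k).
  move: Az Ay zy; case/orP=> /eqP-> ; case/orP=> /eqP->; rewrite ?eqxx //;
  by [left | right].
- rewrite Sz; clearbody l; clear N0 N1 N2 Cz Cy; subst z y.
  rewrite Sum_eq; last first.
    by move=> v va; apply/and3P; split; apply/eqP=> E; [move: za|move: ya|move: xa]; rewrite -E va.
  rewrite Sum_eq; last first.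
    by move=> v va; apply/and3P; split; apply/eqP=> E; [move: zb|move: yb|move: xb]; rewrite -E va.
  have Ik : index k (a' ++ [:: k, j & b']) = size a'.
    by rewrite index_cat (negbTE za) /= eqxx addn0.
  have T1 : take (size a') (a' ++ [:: k, j & b']) = a'.
    by rewrite -{1}(addn0 (size a')) take_cat_size cats0.
  have D1 : drop (size a').+1 (a' ++ [:: k, j & b']) = j :: b'.
    by rewrite -[(size a').+1]addn1 drop_cat_size.
  rewrite Ik T1 D1 size_cat big_cons /= wk.
  lia.
- rewrite Sz; clearbody l; clear N0 N1 N2 Cz Cy; subst z y.
  rewrite Sum_eq; last first.
    by move=> v va; apply/and3P; split; apply/eqP=> E; [move: ya|move: za|move: xa]; rewrite -E va.
  rewrite Sum_eq; last first.
    by move=> v va; apply/and3P; split; apply/eqP=> E; [move: yb|move: zb|move: xb]; rewrite -E va.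
  have Ik : index k (a' ++ [:: j, k & b']) = size a' + 1.
    by rewrite index_cat (negbTE ya) /= eqxx (ltn_eqF jk) addn1.
  rewrite Ik -addnS take_cat_size drop_cat_size [take 1 _]/= [drop 2 _]/= !big_cat !big_cons !big_nil size_cat /= wk.
  rewrite drop0; lia.
Qed.

Arguments dg_range {n c k u v}.
Arguments consec_idx {s u v}.
Arguments consec_idxE {s u v}.
Arguments restrict {n c k a b}.

Lemma exists_chain n c s k : valid_seq n c -> chain_order n (dg c n) s ->
  0 < k -> k <= n -> exists t, chain_order k (dg c k) t.
Proof.
move=> Hv Hs k0 kn; move Hm: (n - k) => m.
elim: m k Hm k0 kn => [|m IH] k Hm k0 kn.
  have E : k = n by lia.
  by rewrite E; exists s.
have [t Ht] : exists t, chain_order k.+1 (dg c k.+1) t.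
  by apply: IH => //; lia.
have Hx : k.+1 \in t by rewrite (chain_mem _ Ht); lia.
move: Ht; case/splitPr: Hx => a b Ht.
have kn' : k < n by lia.
by exists (a ++ b); exact: (@restrict n c k a b Hv k0 kn' Ht).
Qed.



Lemma w_ge2 c k v : 0 < v < k -> 2 <= (dg c k).1 v.
Proof.
elim: k => [|k IH] /andP[v0 vk]; first by lia.
have vn : v != k.+1 by rewrite neq_ltn vk.
rewrite dg_w_step //.
case: (eqVneq v k) => [Evk|vk'].
  rewrite Evk in v0 *; case: k {IH vk vn Evk} v0 => [//|k] _.
  by rewrite dg_w_new /onk /= eqxx.
have := IH ltac:(lia); lia.
Qed.

Lemma sum_const2 (r : seq nat) f : (forall v, v \in r -> f v = 2) ->
  \sum_(v <- r) f v = 2 * size r.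
Proof.
elim: r => [|x r IH] H; first by rewrite big_nil.
rewrite big_cons IH ?H ?inE ?eqxx //=; first by lia.
by move=> v vr; apply: H; rewrite inE vr orbT.
Qed.

Lemma sum_ge2 (r : seq nat) f : (forall v, v \in r -> 2 <= f v) ->
  2 * size r <= \sum_(v <- r) f v.
Proof.
elim: r => [|x r IH] H; first by rewrite big_nil.
rewrite big_cons /=; have := H x (mem_head _ _).
have := IH (fun v vr => H v ltac:(by rewrite inE vr orbT)); lia.
Qed.

Arguments exists_chain {n c s k}.
Section N3.
Variables (n : nat) (c : nat -> option nat) (n3 : nat).
Hypotheses (n1 : 1 <= n) (Hv : valid_seq n c) (Hn3 : n3 <= n) (Hf : free_prefix c n3)
  (Hmax : forall m, m <= n -> free_prefix c m -> m <= n3).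

Lemma n3_pos : 0 < n3.
Proof. by apply: Hmax => // i; lia. Qed.

Lemma pre_none i : 0 < i < n3 -> c i = None.
Proof.
elim: i => [//|i IH] /andP[_ Hi].
case Hc: (c i.+1) => [j|] //.
have [Hj Ha] := Hv i.+1 j erefl (leq_trans Hi Hn3) Hc.
move: Ha; rewrite dg_adj_step /onk.
have -> : (j == i.+1) = false by apply/eqP; lia.
rewrite eqxx.
case: (posnP i) => [->//|ip] /=.
rewrite IH ?ip /=; last by lia.
rewrite orbF => /eqP Ej; subst j.
have H : i.+1 <= n3.-1 by rewrite -subn1; lia.
by case: (Hf i.+1 erefl H).
Qed.

Lemma pre_w k : k <= n3 -> forall v, 0 < v < k -> (dg c k).1 v = 2.
Proof.
elim: k => [|k IH] Hk v /andP[v0 vk]; first by lia.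
have vn : v != k.+1 by rewrite neq_ltn vk.
rewrite dg_w_step // /onk.
case: (eqVneq v k) => [Evk|vk'].
  rewrite Evk in v0 *; case: k {IH Hk vk vn Evk} v0 => [//|k] _.
  by rewrite dg_w_new.
have Hw : (dg c k).1 v = 2 by apply: IH; lia.
rewrite Hw pre_none; last by lia.
by rewrite andbF.
Qed.

Lemma newest_nbr k u : 0 < k <= n3 -> (dg c k).2 k u -> u = k.-1.
Proof.
case: k => [//|k] /andP[_ Hk].
rewrite dg_adj_step eqxx /onk => /andP[/andP[k0 /orP[/eqP E|Hc]] _]; first by rewrite E.
by move: Hc; rewrite pre_none //; lia.
Qed.


Lemma base_ident s : chain_order n3 (dg c n3) s -> last 0 s = 1 ->
  ident n3 n3 (dg c n3).1 s.
Proof.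
move=> Hc Hl.
have U := chain_uniq Hc.
have Hm := chain_mem ^~ Hc.
have Sz : size s = n3 by case: Hc => /perm_size -> _; rewrite size_iota.
have n3p := n3_pos.
have xs : n3 \in s by rewrite Hm; lia.
have [_ A] := Hc.
have p0 : index n3 s = 0.
  case: (posnP (index n3 s)) => // pp; exfalso.
  have ps : index n3 s < size s by rewrite index_mem.
  have Hlast : (index n3 s).+1 < size s.
    rewrite ltn_neqAle ps andbT; apply/eqP => E.
    have : nth 0 s (size s).-1 = 1 by rewrite nth_last.
    rewrite -E /= nth_index // => E1.
    by move: pp ps; rewrite Sz E1; lia.
  set p := index n3 s in pp ps Hlast *.
  have Np : nth 0 s p = n3 by rewrite /p nth_index.
  clearbody p.
  case: p pp ps Hlast Np => [//|q] _ ps Hlast Np.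
  have Ca : consec s (nth 0 s q) n3.
    by rewrite -Np consec_nth //; lia.
  have Cb : consec s n3 (nth 0 s q.+2) by rewrite -Np consec_nth.
  have qs : q < size s by lia.
  have ai : nth 0 s q \in s by apply: mem_nth.
  have bi : nth 0 s q.+2 \in s by apply: mem_nth.
  have Iq := index_uniq 0 qs U.
  have Iq1 := index_uniq 0 ps U.
  have Iq2 := index_uniq 0 Hlast U.
  have an : nth 0 s q != n3.
    by apply/eqP=> E; move: Iq Iq1; rewrite E Np => ->; lia.
  have bn : nth 0 s q.+2 != n3.
    by apply/eqP=> E; move: Iq2 Iq1; rewrite E Np => ->; lia.
  have Ea : nth 0 s q = n3.-1.
    apply: newest_nbr => //; first by lia.
    by rewrite A // 1?eq_sym // consec_sym.
  have Eb : nth 0 s q.+2 = n3.-1.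
    apply: newest_nbr => //; first by lia.
    by rewrite A // eq_sym.
  by move: Iq Iq2; rewrite Ea -Eb => ->; lia.
rewrite /ident p0 take0 big_nil.
case: s Hc Hl U Hm Sz xs A p0 => [//|x r] Hc Hl U Hm Sz xs A p0.
have x3 : x = n3 by move: p0 => /=; case: eqP.
rewrite [drop 1 _]/= drop0 sum_const2 /=; first by move: Sz => /= Sz; lia.
move=> v vr.
have xr : x \notin r by case/andP: U.
have vn : v != n3 by apply/eqP => E; move: xr; rewrite x3 -E vr.
apply: pre_w => //.
have : v \in x :: r by rewrite inE vr orbT.
rewrite Hm; lia.
Qed.

Lemma post_some s d : chain_order n (dg c n) s -> n3 + d < n ->
  exists j, c (n3 + d) = Some j.
Proof.
move=> Hs; elim: d => [|d IH] Hd.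
  rewrite addn0; case Hc: (c n3) => [j|]; first by exists j.
  exfalso.
  have : n3.+1 <= n3; last by lia.
  apply: Hmax; first by lia.
  move=> i i1 iN; case: (ltnP i n3) => [lt|ge].
    by apply: Hf => //; rewrite -subn1; lia.
  have -> : i = n3 by move: iN => /=; lia.
  by rewrite Hc.
have [j' Hj'] := IH ltac:(lia).
rewrite addnS; set m := n3 + d in Hj' Hd *.
have Hd' : m.+2 <= n by rewrite /m; lia.
have mn3 : n3 <= m by rewrite /m; lia.
clearbody m.
case Hc: (c m.+1) => [j|]; first by exists j.
exfalso.
have m0 : 0 < m by have := n3_pos; lia.
have mn : m < n by lia.
have [jm Hadj] := Hv m j' m0 mn Hj'.
have j0 : 0 < j' by have := dg_range Hv (ltnW mn) Hadj; lia.
have [t Ht] := exists_chain Hv Hs (ltn0Sn m.+1) Hd'.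
have U := chain_uniq Ht.
have Hm := chain_mem ^~ Ht.
have [_ A] := Ht.
have e1 : (m.+1 == m.+2) = false by apply/eqP; lia.
have e2 : (m == m.+2) = false by apply/eqP; lia.
have e3 : (j' == m.+2) = false by apply/eqP; lia.
have e4 : (m == m.+1) = false by apply/eqP; lia.
have e5 : (j' == m.+1) = false by apply/eqP; lia.
have e6 : (j' == m) = false by apply/eqP; lia.
have A1 : (dg c m.+2).2 m.+1 m.+2.
  by rewrite dg_adj_step e1 eqxx /onk /= eqxx.
have A2 : (dg c m.+2).2 m.+1 m.
  rewrite dg_adj_step e1 e2 dg_adj_step eqxx /onk Hc m0 /= eqxx e4 /=.
  by rewrite andbF.
have A3 : (dg c m.+2).2 m.+1 j'.
  rewrite dg_adj_step e1 e3 dg_adj_step eqxx /onk Hc Hj' m0 /= eqxx e5 e6 /=.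
  by rewrite andbF.
have xt : m.+1 \in t by rewrite Hm; lia.
have mt : m \in t by rewrite Hm; lia.
have jt : j' \in t by rewrite Hm; lia.
have yt : m.+2 \in t by rewrite Hm; lia.
have C1 := consec_idx U (etrans (esym (A _ _ xt yt (negbT e1))) A1).
have C2 : consec t m.+1 m by rewrite -A // eq_sym e4.
have C3 : consec t m.+1 j' by rewrite -A // eq_sym e5.
move: (consec_idx U C2) (consec_idx U C3) => {C2}C2 {C3}C3.
have N12 : index m.+2 t != index m t.
  by apply/eqP => /(idx_inj yt mt) /eqP; rewrite eq_sym e2.
have N13 : index m.+2 t != index j' t.
  by apply/eqP => /(idx_inj yt jt) /eqP; rewrite eq_sym e3.
have N23 : index m t != index j' t.
  by apply/eqP => /(idx_inj mt jt) /eqP; rewrite eq_sym e6.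
move: C1 C2 C3 N12 N13 N23; move: (index m.+1 t) (index m.+2 t) (index m t) (index j' t).
lia.
Qed.


Lemma main_ident s d : chain_order n (dg c n) s -> n3 + d <= n ->
  forall t, chain_order (n3 + d) (dg c (n3 + d)) t -> last 0 t = 1 ->
  ident (n3 + d) n3 (dg c (n3 + d)).1 t.
Proof.
move=> Hs; elim: d => [|d IH] Hd t Ht Hl.
  by move: Ht Hl; rewrite addn0 => Ht Hl; apply: base_ident.
have p0 : 0 < n3 + d by have := n3_pos; lia.
have pn : n3 + d < n by lia.
have [j Hj] := @post_some s d Hs pn.
move: Ht Hl; rewrite addnS => Ht Hl.
apply: (@step_ident n c n3 (n3 + d) j Hv p0 pn Hj) => //.
by apply: IH; lia.
Qed.
End N3.

Theorem lemma4p1 (n : nat) (c : nat -> option nat) (n3 : nat) (s : seq nat) :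
  1 <= n ->
  valid_seq n c ->
  n3 <= n -> free_prefix c n3 ->
  (forall m, m <= n -> free_prefix c m -> m <= n3) ->
  chain_order n (dg c n) s ->
  last 0 s = 1 ->
  let w := (dg c n).1 in
  let n1 := index n s in
  let n2 := (size s - n1.+1)%N in
  let W1 := (\sum_(v <- take n1 s) w v)%N in
  let W2 := (\sum_(v <- drop n1.+1 s) w v)%N in
  ((W1%:Z - n1%:Z) + n3%:Z - 1 = W2%:Z - n2%:Z)%R /\
  n = (n1 + n2 + 1)%N /\ (n <= n3 + minn W1 W2)%N.
Proof.
move=> H1 Hv Hn3 Hf Hmax Hs Hl.
have Hd : n3 + (n - n3) <= n by rewrite subnKC.
have := @main_ident n c n3 H1 Hv Hn3 Hf Hmax s (n - n3) Hs Hd.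
rewrite subnKC // => /(_ s Hs Hl); rewrite /ident => I.
have U := chain_uniq Hs.
have Hm := chain_mem ^~ Hs.
have Sz : size s = n by case: Hs => /perm_size -> _; rewrite size_iota.
have ns : n \in s by rewrite Hm; lia.
have ps : index n s < size s by rewrite index_mem.
have G1 : 2 * size (take (index n s) s) <= \sum_(v <- take (index n s) s) (dg c n).1 v.
  apply: sum_ge2 => v vt.
  have vs : v \in s by apply: mem_take vt.
  have vn : v != n by apply/eqP=> E; move: vt; rewrite E in_take // ltnn.
  by apply: w_ge2; move: vs vn; rewrite Hm; lia.
have G2 : 2 * size (drop (index n s).+1 s) <= \sum_(v <- drop (index n s).+1 s) (dg c n).1 v.
  apply: sum_ge2 => v vt.
  have vs : v \in s by apply: mem_drop vt.
  have vn : v != n.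
    apply/eqP=> E; move: U; rewrite -(cat_take_drop (index n s).+1 s) cat_uniq.
    case/and3P=> _ /hasPn /(_ v vt); rewrite E in_take // ltnSn //.
  by apply: w_ge2; move: vs vn; rewrite Hm; lia.
move: G1 G2 I; rewrite size_take size_drop ps Sz.
set A := \sum_(v <- take (index n s) s) (dg c n).1 v.
set B := \sum_(v <- drop (index n s).+1 s) (dg c n).1 v.
clearbody A B; set p := index n s in ps *; clearbody p.
move=> G1 G2 I; have n3p : 0 < n3 by apply: Hmax => // i; lia.
split; first by lia.
split; lia.
Qed.
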